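(* Let $p$ be a prime. For each $p$-tuple $(m_1,\dots,m_p)$ of nonnegative integers with $m_1+\dots+m_p\le p-1$ there is an integer $c_{(m_1,\dots,m_p)}$ divisible by $p$ such that the following holds: for every associative ring $R$, every $r\in R$, every commutative subring $A\subseteq R$ with $\mathrm{ad}_r(A)\subseteq A$, and every $a\in A$, $$(ar)^{p-1}a-a^pr^{p-1}-\mathrm{ad}_{ar}^{\,p-1}(a)=\sum_{(m_1,\dots,m_p)}c_{(m_1,\dots,m_p)}\,\mathrm{ad}_r^{m_1}(a)\,\mathrm{ad}_r^{m_2}(a)\cdots\mathrm{ad}_r^{m_p}(a)\,r^{\,p-1-m_1-\dots-m_p}.$$ In other words, this expression is a noncommutative polynomial in $r$ and $a,\mathrm{ad}_r(a),\mathrm{ad}_r^2(a),\dots$ all of whose coefficients are divisible by $p$.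
   Context: For $s\in R$, $\mathrm{ad}_s:R\to R$ is the map $x\mapsto sx-xs$, and $\mathrm{ad}_s^k$ denotes its $k$-fold iterate ($\mathrm{ad}_s^0$ is the identity). No assumption on the characteristic of $R$ is made. *)

(* Defs.v *)
From HB Require Import structures.
From mathcomp Require Import all_boot all_order all_algebra.
Set Implicit Arguments. Unset Strict Implicit. Unset Printing Implicit Defensive.
Import Order.TTheory GRing.Theory Num.Theory.
Local Open Scope ring_scope.

Definition ad (R : pzRingType) (s : R) (x : R) : R := s * x - x * s.

Definition adn (R : pzRingType) (s : R) (k : nat) (x : R) : R := iter k (ad s) x.

(* Main.v *)
Require Import Defs.
From HB Require Import structures.
From mathcomp Require Import all_boot all_order all_algebra.
From mathcomp Require Import zify ring.
Set Implicit Arguments. Unset Strict Implicit. Unset Printing Implicit Defensive.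
Import Order.TTheory GRing.Theory Num.Theory.
Local Open Scope ring_scope.

Definition T := (int * seq nat * nat)%type.

Section Gen.
Variable S : pzRingType.
Variables r a : S.

Definition mon (s : seq nat) : S := \prod_(k <- s) adn r k a.
Definition ev (L : seq T) : S := \sum_(e <- L) (mon e.1.2 * r ^+ e.2) *~ e.1.1.

Lemma ad_mul x y : ad r (x * y) = ad r x * y + x * ad r y.
Proof. by rewrite /ad mulrBl mulrBr !mulrA addrA subrK. Qed.

Lemma ad1 : ad r 1 = 0.
Proof. by rewrite /ad mulr1 mul1r subrr. Qed.

Lemma adnS k x : adn r k.+1 x = ad r (adn r k x).
Proof. by rewrite /adn iterS. Qed.


Fixpoint dmon (s : seq nat) : seq (seq nat) :=
  match s with [::] => [::] | k :: s' => (k.+1 :: s') :: map (cons k) (dmon s') end.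

Lemma mon_cons k s : mon (k :: s) = adn r k a * mon s.
Proof. by rewrite /mon big_cons. Qed.

Lemma ad_mon s : ad r (mon s) = \sum_(s' <- dmon s) mon s'.
Proof.
elim: s => [|k s IH] /=; first by rewrite /mon big_nil ad1 big_nil.
rewrite mon_cons ad_mul IH big_cons mon_cons -adnS; congr (_ + _).
by rewrite big_map mulr_sumr; apply: eq_bigr => s' _; rewrite mon_cons.
Qed.

Definition opA (L : seq T) : seq T := [seq (e.1.1, 0%N :: e.1.2, e.2) | e <- L].
Definition opR (L : seq T) : seq T :=
  flatten [seq (e.1.1, e.1.2, e.2.+1) :: [seq (e.1.1, s', e.2) | s' <- dmon e.1.2] | e <- L].
Definition scl (z : int) (L : seq T) : seq T := [seq (e.1.1 * z, e.1.2, e.2) | e <- L].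
Definition shf (k : nat) (L : seq T) : seq T := [seq (e.1.1, e.1.2, (e.2 + k)%N) | e <- L].

Lemma ev_nil : ev [::] = 0.
Proof. by rewrite /ev big_nil. Qed.

Lemma ev_cons e L : ev (e :: L) = (mon e.1.2 * r ^+ e.2) *~ e.1.1 + ev L.
Proof. by rewrite /ev big_cons. Qed.

Lemma ev_cat L1 L2 : ev (L1 ++ L2) = ev L1 + ev L2.
Proof. by rewrite /ev big_cat. Qed.

Lemma ev_flatten (LL : seq (seq T)) : ev (flatten LL) = \sum_(L <- LL) ev L.
Proof. elim: LL => [|L LL IH]; first by rewrite big_nil ev_nil. by rewrite /= ev_cat IH big_cons. Qed.

Lemma ev_opA L : ev (opA L) = a * ev L.
Proof.
rewrite /ev big_map mulr_sumr; apply: eq_bigr => e _ /=.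
by rewrite mon_cons /adn /= mulrzAr mulrA.
Qed.

Lemma ev_opR L : ev (opR L) = r * ev L.
Proof.
rewrite /opR ev_flatten big_map /ev mulr_sumr; apply: eq_bigr => e _ /=.
rewrite big_cons /= big_map mulrzAr mulrA.
have -> : r * mon e.1.2 = mon e.1.2 * r + ad r (mon e.1.2) by rewrite /ad addrC subrK.
rewrite mulrDl ad_mon mulr_suml mulrzDl; congr (_ + _); first by rewrite -mulrA -exprS.
by rewrite mulrz_suml; apply: eq_bigr.
Qed.

Lemma ev_scl z L : ev (scl z L) = ev L *~ z.
Proof. by rewrite /ev big_map mulrz_suml; apply: eq_bigr => e _ /=; rewrite mulrzA. Qed.

Lemma ev_shf k L : ev (shf k L) = ev L * r ^+ k.
Proof.
by rewrite /ev big_map mulr_suml; apply: eq_bigr => e _ /=; rewrite mulrzAl exprD mulrA.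
Qed.

End Gen.

Definition wfe (d w : nat) (e : T) : bool := (size e.1.2 == d) && (sumn e.1.2 + e.2 == w)%N.

Lemma dmon_props s s' : s' \in dmon s -> size s' = size s /\ sumn s' = (sumn s).+1.
Proof.
elim: s s' => [|k s IH] s' //=; rewrite inE => /orP [/eqP -> //|].
case/mapP => s'' /IH [h1 h2] -> /=; split; first by rewrite h1.
by rewrite h2 addnS.
Qed.

Lemma wf_opA d w L : all (wfe d w) L -> all (wfe d.+1 w) (opA L).
Proof. by move=> /allP H; apply/allP => e /mapP [e' /H] + ->. Qed.

Lemma wf_opR d w L : all (wfe d w) L -> all (wfe d w.+1) (opR L).
Proof.
move=> /allP H; apply/allP => e /flattenP [l /mapP [e' /H + ->]].
rewrite inE => /andP [/eqP h1 /eqP h2] /orP [/eqP -> | /mapP [s' /dmon_props [h3 h4] ->]].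
  by rewrite /wfe /= h1 eqxx addnS h2 eqxx.
by rewrite /wfe /= h3 h4 h1 addSn h2 !eqxx.
Qed.

Lemma wf_scl d w z L : all (wfe d w) L -> all (wfe d w) (scl z L).
Proof. by move=> /allP H; apply/allP => e /mapP [e' /H] + ->. Qed.

Lemma wf_shf d w k L : all (wfe d w) L -> all (wfe d (w + k)) (shf k L).
Proof.
move=> /allP H; apply/allP => e /mapP [e' /H /andP [h1 /eqP h2] ->].
by rewrite /wfe /= h1 addnA h2 eqxx.
Qed.

Definition adL (L : seq T) : seq T := opR L ++ scl (-1) (shf 1 L).

Lemma wf_adL d w L : all (wfe d w) L -> all (wfe d w.+1) (adL L).
Proof.
move=> h; rewrite /adL all_cat wf_opR //=; apply: wf_scl; rewrite -addn1; exact: wf_shf.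
Qed.

Lemma ev_adL (S : pzRingType) (r a : S) L : ev r a (adL L) = ad r (ev r a L).
Proof. by rewrite /adL ev_cat ev_opR ev_scl ev_shf expr1 mulrN1z. Qed.

Lemma mon_nil (S : pzRingType) (r a : S) : mon r a [::] = 1.
Proof. by rewrite /mon big_nil. Qed.

Definition K1 : seq T := [:: (1%:Z, [:: 0%N], 0%N)].
Lemma ev_K1 (S : pzRingType) (r a : S) : ev r a K1 = a.
Proof. by rewrite ev_cons ev_nil addr0 /= mon_cons mon_nil expr0 !mulr1. Qed.

Fixpoint Pn (S : pzRingType) (r a : S) (n j : nat) : S :=
  match n with
  | 0 => if j == 0%N then a else 0
  | n'.+1 => (if j is j'.+1 then a * Pn r a n' j' else 0) + a * ad r (Pn r a n' j)
  end.

Fixpoint PL (n j : nat) : seq T :=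
  match n with
  | 0 => if j == 0%N then K1 else [::]
  | n'.+1 => (if j is j'.+1 then opA (PL n' j') else [::]) ++ opA (adL (PL n' j))
  end.

Lemma Pn_ev (S : pzRingType) (r a : S) n j : Pn r a n j = ev r a (PL n j).
Proof.
elim: n j => [|n IH] j /=; first by case: (j == 0%N); rewrite ?ev_K1 ?ev_nil.
rewrite ev_cat ev_opA ev_adL -IH; congr (_ + _).
by case: j => [|j]; rewrite ?ev_nil // ev_opA IH.
Qed.

Lemma PL_nil n j : (n < j)%N -> PL n j = [::].
Proof.
elim: n j => [|n IH] [|j] //= hj; rewrite IH // IH //; exact: ltnW.
Qed.

Lemma Pn0 (S : pzRingType) (r a : S) n j : (n < j)%N -> Pn r a n j = 0.
Proof. by move=> h; rewrite Pn_ev PL_nil // ev_nil. Qed.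

Lemma PL_wf n j : (j <= n)%N -> all (wfe n.+1 (n - j)) (PL n j).
Proof.
elim: n j => [|n IH] j /=.
  by rewrite leqn0 => /eqP ->.
move=> hj; rewrite all_cat; apply/andP; split.
  case: j hj => [|j] hj //; rewrite subSS; apply: wf_opA; exact: IH.
case: (leqP j n) => hjn.
  apply: wf_opA; rewrite subSn //; apply: wf_adL; exact: IH.
by rewrite PL_nil.
Qed.

Lemma ad0 (S : pzRingType) (r : S) : ad r 0 = 0.
Proof. by rewrite /ad mulr0 mul0r subrr. Qed.

Lemma Pn_sum (S : pzRingType) (r a : S) n :
  (a * r) ^+ n * a = \sum_(j < n.+1) Pn r a n j * r ^+ j.
Proof.
elim: n => [|n IH]; first by rewrite big_ord1 /= expr0 mul1r mulr1.
rewrite exprS -mulrA IH -mulrA mulr_sumr.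
have -> : \sum_(i < n.+1) r * (Pn r a n i * r ^+ i) =
          \sum_(i < n.+1) (Pn r a n i * r ^+ i.+1 + ad r (Pn r a n i) * r ^+ i).
  apply: eq_bigr => i _; rewrite mulrA.
  have -> : r * Pn r a n i = Pn r a n i * r + ad r (Pn r a n i) by rewrite /ad addrC subrK.
  by rewrite mulrDl -mulrA -exprS.
rewrite big_split mulrDr /=.
under [in RHS]eq_bigr => j _ do rewrite mulrDl.
rewrite big_split /= [X in _ = X + _]big_ord_recl /= mul0r add0r.
rewrite [X in _ = _ + X]big_ord_recr /= Pn0 // ad0 mulr0 mul0r addr0.
by rewrite !mulr_sumr; congr (_ + _); apply: eq_bigr => i _; rewrite mulrA.
Qed.

Lemma Pn_top (S : pzRingType) (r a : S) n : Pn r a n n = a ^+ n.+1.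
Proof.
elim: n => [|n IH] /=; first by rewrite expr1.
by rewrite IH Pn0 // ad0 mulr0 addr0 -exprS.
Qed.

Lemma Pn_ad0 (S : pzRingType) (r a : S) n :
  (forall m, a * Pn r a m 0 = Pn r a m 0 * a) -> adn (a * r) n a = Pn r a n 0.
Proof.
move=> hc; elim: n => [|n IH] //=.
by rewrite IH add0r /ad mulrBr !mulrA hc.
Qed.

Definition F (L : seq T) : seq T := opA (opR L).
Definition K0 : seq T := [:: (1%:Z, [::], 0%N)].
Lemma ev_K0 (S : pzRingType) (r a : S) : ev r a K0 = 1.
Proof. by rewrite ev_cons ev_nil addr0 /= mon_nil expr0 mulr1. Qed.

Lemma ev_iterF (S : pzRingType) (r a : S) k L :
  ev r a (iter k F L) = (a * r) ^+ k * ev r a L.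
Proof.
elim: k => [|k IH] /=; first by rewrite expr0 mul1r.
by rewrite /F ev_opA ev_opR IH exprS !mulrA.
Qed.

Lemma wf_iterF d w k L : all (wfe d w) L -> all (wfe (d + k) (w + k)) (iter k F L).
Proof.
move=> h; elim: k => [|k IH] /=; first by rewrite !addn0.
by rewrite !addnS; apply: wf_opA; apply: wf_opR.
Qed.

Definition WL (u k : nat) : seq T := iter u F (opA (iter k F K0)).

Lemma ev_WL (S : pzRingType) (r a : S) u k :
  ev r a (WL u k) = (a * r) ^+ u * (a * (a * r) ^+ k).
Proof. by rewrite /WL ev_iterF ev_opA ev_iterF ev_K0 mulr1. Qed.

Lemma wf_WL u k : all (wfe (k.+1 + u) (k + u)) (WL u k).
Proof.
apply: wf_iterF; apply: wf_opA; rewrite -[k in wfe k]add0n -[k in wfe _ k]add0n.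
exact: wf_iterF.
Qed.

Definition fk (p k : nat) : int := ((1 - (-1) ^+ k * ('C(p.-1, k))%:Z) %/ p%:Z)%Z.

Definition ML (p : nat) : seq T :=
  flatten [seq scl (fk p k) (WL (p.-1 - k) k) | k <- iota 0 p].

Lemma ev_ML (S : pzRingType) (r a : S) p :
  ev r a (ML p) = \sum_(k < p) ((a * r) ^+ (p.-1 - k) * (a * (a * r) ^+ k)) *~ fk p k.
Proof.
rewrite /ML ev_flatten big_map -(big_mkord xpredT (fun k => ((a * r) ^+ (p.-1 - k) * (a * (a * r) ^+ k)) *~ fk p k)) /index_iota subn0.
by apply: eq_bigr => k _; rewrite ev_scl ev_WL.
Qed.

Lemma wf_ML p : all (wfe p p.-1) (ML p).
Proof.
apply/allP => e /flattenP [l /mapP [k]]; rewrite mem_iota add0n => /andP [_ hk] ->.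
have := wf_WL (p.-1 - k) k.
have -> : (k.+1 + (p.-1 - k) = p)%N by lia.
have -> : (k + (p.-1 - k) = p.-1)%N by lia.
by move=> h1 h2; move: (wf_scl (fk p k) h1) => /allP; apply.
Qed.

Lemma adn_expand (S : pzRingType) (x y : S) n :
  adn x n y = \sum_(k < n.+1) (x ^+ (n - k) * y * x ^+ k) *~ ((-1) ^+ k * ('C(n, k))%:Z).
Proof.
elim: n => [|n IH]; first by rewrite big_ord1 /= !expr0 mulr1 mul1r mulr1z.
rewrite adnS IH /ad mulr_sumr mulr_suml.
under eq_bigr => k _ do rewrite mulrzAr.
under [X in _ - X = _]eq_bigr => k _ do rewrite mulrzAl.
rewrite [RHS]big_ord_recl /= subn0 !expr0 mulr1 bin0 mulr1 mulr1z.
have -> : \sum_(i < n.+1)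
    (x ^+ (n.+1 - bump 0 i) * y * x ^+ bump 0 i) *~ ((-1) ^+ bump 0 i * ('C(n.+1, bump 0 i))%:Z)
  = \sum_(i < n.+1) (x ^+ (n - i) * y * x ^+ i * x) *~ ((-1) ^+ i.+1 * ('C(n, i.+1))%:Z)
    - \sum_(i < n.+1) (x ^+ (n - i) * y * x ^+ i * x) *~ ((-1) ^+ i * ('C(n, i))%:Z).
  rewrite -sumrB; apply: eq_bigr => i _.
  rewrite /bump /= add1n subSS binS PoszD mulrDr mulrzDr.
  rewrite -[x ^+ (n - i) * y * x ^+ i * x]mulrA -exprSr (exprS (-1 : int)) mulN1r !mulNr !mulrNz.
  by [].
rewrite addrA; congr (_ - _).
rewrite big_ord_recl /= subn0 !expr0 bin0 mulr1 mulr1z; congr (_ + _).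
  by rewrite mulrA -exprS.
rewrite [RHS]big_ord_recr /= bin_small // mulr0 mulr0z addr0.
apply: eq_bigr => i _; rewrite /bump /= add1n -!mulrA -exprSr; congr (_ *~ _).
by rewrite mulrA -exprS subnSK.
Qed.

Lemma sign_binom_mod p k : prime p -> (k < p)%N ->
  (p%:Z %| (1 - (-1) ^+ k * ('C(p.-1, k))%:Z))%Z.
Proof.
move=> hp; elim: k => [|k IH] hk; first by rewrite expr0 bin0 mul1r subrr dvdz0.
have hkp : (k < p)%N by apply: ltnW.
have hb : ('C(p, k.+1) = 'C(p.-1, k.+1) + 'C(p.-1, k))%N.
  by rewrite -binS prednK // prime_gt0.
have hd : (p%:Z %| ('C(p, k.+1))%:Z)%Z.
  by apply: (prime_dvd_bin hp); rewrite hk.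
have -> : 1 - (-1) ^+ k.+1 * ('C(p.-1, k.+1))%:Z
  = (1 - (-1) ^+ k * ('C(p.-1, k))%:Z) + (-1) ^+ k * ('C(p, k.+1))%:Z.
  rewrite hb PoszD exprS; ring.
by rewrite rpredD ?IH // dvdz_mull.
Qed.

Lemma fk_mul p k : prime p -> (k < p)%N ->
  fk p k * p%:Z = 1 - (-1) ^+ k * ('C(p.-1, k))%:Z.
Proof. by move=> hp hk; rewrite /fk divzK // sign_binom_mod. Qed.

Lemma coefMz (R : nzRingType) (q : {poly R}) (z : int) i : (q *~ z)`_i = q`_i *~ z.
Proof. exact: (raddfMz (coefp i)). Qed.

Definition ext (i : nat) (L : seq T) : seq T :=
  [seq (e.1.1 * ('C(e.2, i))%:Z, e.1.2, (e.2 - i)%N) | e <- L & (i <= e.2)%N].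

Lemma wf_ext d w i L : all (wfe d w) L -> all (wfe d (w - i)) (ext i L).
Proof.
move=> /allP H; apply/allP => e /mapP [e']; rewrite mem_filter => /andP [hi /H].
by move=> /andP [h1 /eqP h2] ->; rewrite /wfe /= h1 -h2 addnBA // eqxx.
Qed.

Section PolyPart.
Variable S : nzRingType.
Variables r a : S.
Local Notation aT := (a%:P : {poly S}).
Local Notation rT := (r%:P + 'X : {poly S}).

Lemma adT (y : S) : ad rT y%:P = (ad r y)%:P.
Proof.
rewrite /ad mulrDl mulrDr -!polyCM (commr_polyX (y%:P)) polyCB.
by rewrite opprD addrACA subrr addr0.
Qed.

Lemma adnT k : adn rT k aT = (adn r k a)%:P.
Proof. by elim: k => [|k IH] //; rewrite !adnS IH adT. Qed.

Lemma monT s : mon rT aT s = (mon r a s)%:P.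
Proof. by elim: s => [|k s IH]; rewrite ?mon_nil ?polyC1 // !mon_cons IH adnT polyCM. Qed.

Lemma PnT n j : Pn rT aT n j = (Pn r a n j)%:P.
Proof.
elim: n j => [|n IH] j; first by rewrite /=; case: (j == 0%N); rewrite ?polyC0.
case: j => [|j].
  change (0 + aT * ad rT (Pn rT aT n 0) = (0 + a * ad r (Pn r a n 0))%:P).
  by rewrite !add0r IH adT polyCM.
change (aT * Pn rT aT n j + aT * ad rT (Pn rT aT n j.+1)
  = (a * Pn r a n j + a * ad r (Pn r a n j.+1))%:P).
by rewrite !IH adT -!polyCM -polyCD.
Qed.

Lemma coef_rT j i : (rT ^+ j)`_i = r ^+ (j - i) *+ 'C(j, i).
Proof.
elim: j i => [|j IH] i.
  by rewrite expr0 coefC; case: i => [|i] //=; rewrite bin0n.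
rewrite exprSr mulrDr coefD coefMC coefMX IH.
case: i => [|i] /=; first by rewrite !bin0 !mulr1n subn0 addr0 -exprSr.
rewrite binS mulrnDr subSS; congr (_ + _).
case: (leqP i.+1 j) => hij.
  by rewrite mulrnAl -exprSr subnSK.
  by rewrite bin_small // mulr0n mul0r.
exact: IH.
Qed.

Lemma coef_ev i L : (ev rT aT L)`_i = ev r a (ext i L).
Proof.
rewrite /ev coef_sum /ext big_map big_filter [RHS]big_mkcond /=; apply: eq_bigr => e _.
rewrite coefMz monT coefCM coef_rT.
case: leqP => h.
  by rewrite mulrnAr pmulrn -mulrzA [X in _ *~ X]mulrC.
rewrite bin_small //.
by rewrite mulr0n mulr0 mul0rz.
Qed.

End PolyPart.

Lemma deriv_pow (R : nzRingType) (q : {poly R}) n :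
  (q ^+ n)^`() = \sum_(k < n) q ^+ (n.-1 - k) * q^`() * q ^+ k.
Proof.
elim: n => [|n IH]; first by rewrite big_ord0 expr0 -polyC1 derivC.
rewrite exprS derivM IH big_ord_recr /= subnn expr0 mul1r addrC; congr (_ + _).
rewrite mulr_sumr; apply: eq_bigr => k _ /=; rewrite !mulrA -exprS.
by have -> : (n.-1 - k).+1 = (n - k)%N by case: k => k hk /=; lia.
Qed.

Lemma deriv_rTpow (R : nzRingType) (r : R) n :
  ((r%:P + 'X) ^+ n)^`() = (r%:P + 'X) ^+ n.-1 *+ n.
Proof.
have dq : (r%:P + 'X)^`() = 1 by rewrite derivD derivC derivX add0r.
elim: n => [|n IH]; first by rewrite expr0 -polyC1 derivC mulr0n.
rewrite exprS derivM dq mul1r IH mulrnAr /=.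
case: n IH => [|n] IH; first by rewrite mulr0n addr0.
by rewrite /= -exprS -mulrS.
Qed.

Lemma key_nz (S : nzRingType) (r a : S) n i :
  prime n.+1 -> (0 < i)%N ->
  (forall m, a * Pn r a m 0 = Pn r a m 0 * a) ->
  \sum_(j < n.+1) (Pn r a n j * r ^+ (j - i)) *+ ('C(j, i) * j.+1)
    = ev r a (ext i (ML n.+1)) *+ n.+1.
Proof.
move=> hp hi hc.
pose aT : {poly S} := a%:P. pose rT : {poly S} := r%:P + 'X. pose X := aT * rT.
have dX : X^`() = aT.
  by rewrite /X derivM derivC mul0r add0r derivD derivC derivX add0r mulr1.
have E1 : (X ^+ n.+1)^`() = \sum_(k < n.+1) X ^+ (n - k) * aT * X ^+ k.
  by rewrite deriv_pow dX.
have E2 : \sum_(k < n.+1) X ^+ (n - k) * aT * X ^+ k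
          = adn X n aT + ev rT aT (ML n.+1) *+ n.+1.
  rewrite adn_expand ev_ML /=.
  rewrite -sumrMnl -big_split /=; apply: eq_bigr => k _.
  rewrite pmulrn -mulrzA fk_mul // mulrA mulrzBr mulr1z addrC subrK.
  done.
have hcT : forall m, aT * Pn rT aT m 0 = Pn rT aT m 0 * aT.
  by move=> m; rewrite /aT /rT PnT -!polyCM hc.
have E3 : adn X n aT = (Pn r a n 0)%:P.
  by rewrite /X Pn_ad0 // /aT /rT PnT.
have E4 : X ^+ n.+1 = \sum_(j < n.+1) (Pn r a n j)%:P * rT ^+ j.+1.
  rewrite exprSr /X mulrA Pn_sum mulr_suml; apply: eq_bigr => j _.
  by rewrite /aT /rT PnT -mulrA -exprSr.
have E5 : (X ^+ n.+1)^`() = \sum_(j < n.+1) (Pn r a n j)%:P * rT ^+ j *+ j.+1.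
  rewrite E4 raddf_sum.
  apply: eq_bigr => j _ /=.
  by rewrite derivM derivC mul0r add0r /rT deriv_rTpow mulrnAr.
have := congr1 (fun q : {poly S} => q`_i) (etrans (esym E5) (etrans E1 E2)).
rewrite /= coef_sum coefD E3 coefC (negbTE (lt0n_neq0 hi)) add0r coefMn coef_ev => <-.
apply: eq_bigr => j _.
by rewrite coefMn coefCM coef_rT mulrnAr -mulrnA.
Qed.

Definition nzA (R : pzRingType) (h : (1:R) != 0) : Type := R.
HB.instance Definition _ (R : pzRingType) (h : (1:R) != 0) := GRing.PzRing.on (nzA h).
HB.instance Definition _ (R : pzRingType) (h : (1:R) != 0) :=
  GRing.PzSemiRing_isNonZero.Build (nzA h) h.

Lemma key (S : pzRingType) (r a : S) n i :
  prime n.+1 -> (0 < i)%N ->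
  (forall m, a * Pn r a m 0 = Pn r a m 0 * a) ->
  \sum_(j < n.+1) (Pn r a n j * r ^+ (j - i)) *+ ('C(j, i) * j.+1)
    = ev r a (ext i (ML n.+1)) *+ n.+1.
Proof.
move=> hp hi; move: r a; case: S => T cls r a hc; case: (eqVneq (1 : GRing.PzRing.Pack cls) 0) => h1.
  have z : forall x : GRing.PzRing.Pack cls, x = 0 by move=> x; rewrite -[x]mulr1 h1 mulr0.
  by rewrite (z (\sum_(j < n.+1) _)) (z (_ *+ _)).
have H := @key_nz (nzA h1) r a n i hp hi hc.
exact H.
Qed.

Definition hyps (S : pzRingType) (r : S) (A : {pred S}) (a : S) :=
  [/\ subring_closed A, {in A &, forall x y, x * y = y * x},
      {in A, forall x, ad r x \in A} & a \in A].

Lemma Pn_inA (S : pzRingType) (r : S) (A : {pred S}) a n j :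
  hyps r A a -> Pn r a n j \in A.
Proof.
case=> [[h1 hB hM] _ hD ha].
have h0 : 0 \in A by rewrite -(subrr 1) hB.
have hN : {in A, forall x, - x \in A} by move=> x hx; rewrite -sub0r hB.
have hA : {in A &, forall x y, x + y \in A}.
  by move=> x y hx hy; rewrite -[y]opprK hB // hN.
elim: n j => [|n IH] j /=; first by case: (j == 0%N).
apply: hA; last by apply: hM => //; apply: hD.
by case: j => [|j] //; apply: hM.
Qed.

Lemma Pn_comm (S : pzRingType) (r : S) (A : {pred S}) a :
  hyps r A a -> forall m, a * Pn r a m 0 = Pn r a m 0 * a.
Proof.
move=> H m; case: (H) => _ hc _ ha; apply: hc => //; exact: Pn_inA.
Qed.

Definition Good n i (L : seq T) :=
  all (wfe n.+1 (n - i)) L /\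
  forall (S : pzRingType) (r : S) (A : {pred S}) a, hyps r A a ->
    Pn r a n i = ev r a L *+ n.+1.

Lemma all_flattenP (P : pred T) (LL : seq (seq T)) :
  (forall L, L \in LL -> all P L) -> all P (flatten LL).
Proof.
move=> H; apply/allP => e /flattenP [L /H /allP]; apply.
Qed.

Lemma step n i (Lam : nat -> seq T) : prime n.+1 -> (0 < i)%N -> (i < n)%N ->
  (forall j, (i < j)%N -> (j < n)%N -> Good n j (Lam j)) -> exists G, Good n i G.
Proof.
move=> hp hi hin HL.
pose Th j := if (j <= i)%N then [::] else if j == n then scl ('C(n, i))%:Z (shf (n - i) (PL n n))
             else scl (('C(j, i) * j.+1)%N)%:Z (shf (j - i) (Lam j)).
pose FL := flatten [seq Th j | j <- iota 0 n.+1].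
pose G0 := ext i (ML n.+1) ++ scl (-1) FL.
have [u [v huv]] : exists u v : int, u * (i.+1)%:Z + v * (n.+1)%:Z = 1.
  have [u [v huv]] := Bezoutz (i.+1)%:Z (n.+1)%:Z.
  exists u, v; rewrite huv /gcdz /= gcdnC.
  have : coprime n.+1 i.+1 by rewrite prime_coprime // gtnNdvd.
  by rewrite /coprime => /eqP ->.
exists (scl u G0 ++ scl v (PL n i)); split.
  rewrite all_cat; apply/andP; split; apply: wf_scl; last by apply: PL_wf; apply: ltnW.
  rewrite all_cat; apply/andP; split; first exact: wf_ext (wf_ML n.+1).
  apply: wf_scl; apply: all_flattenP => L /mapP [j]; rewrite mem_iota add0n => /andP [_ hj] ->.
  rewrite /Th; case: leqP => hij //.
  case: eqP => hjn.
    apply: wf_scl; rewrite -[(n - i)%N]add0n; apply: wf_shf; rewrite -(subnn n); exact: PL_wf.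
  apply: wf_scl; have -> : (n - i = (n - j) + (j - i))%N by lia.
  apply: wf_shf; apply: (HL j hij _).1; lia.
move=> S r A a H.
have hc := Pn_comm H.
have K := key hp hi hc.
have hT : forall j : 'I_n.+1, (Pn r a n j * r ^+ (j - i)) *+ ('C(j, i) * j.+1)
   = (if (j : nat) == i then Pn r a n i *+ i.+1 else 0) + ev r a (Th j) *+ n.+1.
  move=> [j hj] /=; rewrite /Th.
  case: (ltngtP j i) => hij.
  - by rewrite bin_small // mul0n mulr0n ev_nil mul0rn addr0.
  - rewrite add0r; case: eqP => hjn.
      by rewrite hjn ev_scl ev_shf -Pn_ev -pmulrn mulrnA.
    have hjn' : (j < n)%N by lia.
    have [_ hG] := HL j hij hjn'.
    by rewrite (hG S r A a H) ev_scl ev_shf -pmulrn mulrnAl mulrnAC.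
  - by rewrite hij subnn expr0 mulr1 binn mul1n ev_nil mul0rn addr0.
have hi1 : (i < n.+1)%N by apply: ltnW; rewrite ltnS.
have K2 : Pn r a n i *+ i.+1 + ev r a FL *+ n.+1 = ev r a (ext i (ML n.+1)) *+ n.+1.
  rewrite -K (eq_bigr _ (fun j _ => hT j)) big_split /=; congr (_ + _).
    rewrite (bigD1 (Ordinal hi1)) //= eqxx big1 ?addr0 // => j hj.
    rewrite ifF //; apply/negbTE; move: hj; apply: contra => /eqP h; apply/eqP.
    exact: val_inj.
  rewrite sumrMnl /FL ev_flatten big_map.
  by rewrite -(big_mkord xpredT (fun j => ev r a (Th j))) /index_iota subn0.
have K3 : ev r a G0 *+ n.+1 = Pn r a n i *+ i.+1.
  by rewrite /G0 ev_cat ev_scl mulrN1z mulrnBl -K2 addrK.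
rewrite ev_cat !ev_scl -Pn_ev mulrnDl pmulrn mulrzAC -pmulrn K3.
rewrite !pmulrn -!mulrzA -mulrzDr (mulrC (i.+1)%:Z u) huv.
by rewrite mulr1z.
Qed.

Lemma nth_le_sumn (s : seq nat) i : (nth 0 s i <= sumn s)%N.
Proof.
elim: s i => [|k s IH] [|i] //=; first exact: leq_addr.
by apply: leq_trans (IH i) _; apply: leq_addl.
Qed.

Definition mf n (s : seq nat) : {ffun 'I_n.+1 -> 'I_n.+1} := [ffun i : 'I_n.+1 => inord (nth 0%N s i)].

Lemma mf_props n (S : pzRingType) (r a : S) (e : T) : wfe n.+1 n e ->
  let m := mf n e.1.2 in
  [/\ (\sum_(i < n.+1) (m i : nat) = sumn e.1.2)%N,
      (\sum_(i < n.+1) (m i : nat) <= n)%N &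
      (\prod_(i < n.+1) adn r (m i) a) * r ^+ (n - \sum_(i < n.+1) (m i : nat))
        = mon r a e.1.2 * r ^+ e.2].
Proof.
move=> /andP [/eqP hs /eqP hw] m.
have hm : forall i : 'I_n.+1, (m i : nat) = nth 0 e.1.2 i.
  move=> i; rewrite /m /mf ffunE inordK // ltnS.
  by apply: leq_trans (nth_le_sumn _ _) _; rewrite -hw leq_addr.
have hsum : (\sum_(i < n.+1) (m i : nat) = sumn e.1.2)%N.
  under eq_bigr => i _ do rewrite hm.
  by rewrite sumnE (big_nth 0%N) hs big_mkord.
split => //; first by rewrite hsum -hw leq_addr.
rewrite hsum; congr (_ * _); last by congr (_ ^+ _); lia.
under eq_bigr => i _ do rewrite hm.
by rewrite /mon (big_nth 0%N) hs big_mkord.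
Qed.

Lemma to_ffun n (L : seq T) : all (wfe n.+1 n) L ->
  exists c : {ffun 'I_n.+1 -> 'I_n.+1} -> int,
  forall (S : pzRingType) (r a : S),
    ev r a L = \sum_(m : {ffun 'I_n.+1 -> 'I_n.+1} | (\sum_(i < n.+1) (m i : nat) <= n)%N)
      ((\prod_(i < n.+1) adn r (m i) a) * r ^+ (n - \sum_(i < n.+1) (m i : nat))) *~ c m.
Proof.
move=> /allP hL.
exists (fun m => \sum_(e <- L | mf n e.1.2 == m) e.1.1) => S r a.
under [RHS]eq_bigr => m _ do rewrite mulrz_sumr.
rewrite (exchange_big_dep xpredT) //= /ev; apply: eq_big_seq => e he.
have [h1 h2 h3] := mf_props r a (hL e he).
rewrite (big_pred1 (mf n e.1.2)) ?h3 //.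
move=> m /=; apply/andP/eqP => [[_ /eqP] -> //| ->]; split => //.
Qed.

Lemma desc n : prime n.+1 -> forall k, exists Lam : nat -> seq T,
  forall j, (n - k <= j)%N -> (0 < j)%N -> (j < n)%N -> Good n j (Lam j).
Proof.
move=> hp; elim => [|k [Lam HL]].
  by exists (fun _ => [::]) => j; rewrite subn0 => h1 _ h2; lia.
case: (ltnP 0 (n - k.+1)) => hik.
  have [G HG] := @step n (n - k.+1)%N Lam hp hik (ltac:(lia))
    (fun j h1 h2 => HL j (ltac:(lia)) (ltac:(lia)) h2).
  exists (fun j => if j == (n - k.+1)%N then G else Lam j) => j h1 h2 h3.
  case: eqP => hj; first by rewrite hj.
  apply: HL => //; lia.
by exists Lam => j h1 h2 h3; apply: HL => //; lia.
Qed.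

Theorem lemma8p1 (p : nat) (hp : prime p) :
  exists c : {ffun 'I_p -> 'I_p} -> int,
    (forall m : {ffun 'I_p -> 'I_p},
        (\sum_(i < p) (m i : nat) <= p.-1)%N -> (p%:Z %| c m)%Z) /\
    forall (R : pzRingType) (r : R) (A : {pred R}),
      subring_closed A ->
      {in A &, forall x y, x * y = y * x} ->
      {in A, forall x, ad r x \in A} ->
      forall a, a \in A ->
        (a * r) ^+ p.-1 * a - a ^+ p * r ^+ p.-1 - adn (a * r) p.-1 a =
        \sum_(m : {ffun 'I_p -> 'I_p} | (\sum_(i < p) (m i : nat) <= p.-1)%N)
          ((\prod_(i < p) adn r (m i) a) * r ^+ (p.-1 - \sum_(i < p) (m i : nat))) *~ c m.
Proof.
case: p hp => [|n] hp //=.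
have [Lam HL] := desc hp n.
pose FF := flatten [seq shf j (Lam j) | j <- index_iota 1 n].
have wfFF : all (wfe n.+1 n) FF.
  apply: all_flattenP => L /mapP [j]; rewrite mem_index_iota => /andP [h1 h2] ->.
  move: (wf_shf j (HL j (ltac:(lia)) h1 h2).1).
  by have -> : (n - j + j = n)%N by lia.
have [c' Hc'] := to_ffun wfFF.
exists (fun m => c' m * n.+1%:Z); split => [m _|R r A hA hcomm had a ha].
  exact: dvdz_mull.
have H : hyps r A a by [].
have n0 : (0 < n)%N by case: n hp {Lam HL FF wfFF c' Hc'}.
under eq_bigr => m _ do rewrite mulrzA -pmulrn.
rewrite sumrMnl -Hc'.
rewrite Pn_sum -(Pn_top r a n) Pn_ad0; last exact: Pn_comm H.
rewrite -(big_mkord xpredT (fun j => Pn r a n j * r ^+ j)) big_ltn //.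
rewrite big_nat_recr //= expr0 mulr1 addrA addrK [Pn r a n 0 + _]addrC addrK.
rewrite /FF ev_flatten big_map -sumrMnl; apply: eq_big_nat => j /andP [h1 h2].
have [_ HG] := HL j (ltac:(lia)) h1 h2.
rewrite (HG R r A a H).
by rewrite ev_shf mulrnAl.
Qed.
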